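(* Let $r\ge 3$ and let $\mathcal H=(V,E)$ be an $r$-uniform bi-hypergraph. Suppose $V$ has a partition $V_1,\dots,V_r$ such that each $V_i$ ($i\in[r]$) is independent in $\mathcal H$, $V_r=\{w\}$ for a single vertex $w$, and for every edge $e\in E$ with $w\in e$ there is some $i\in[r-1]$ with $e\cap V_i=\emptyset$. Then $\mathcal H$ is colorable.
   Context: A bi-hypergraph $\mathcal H=(V,E)$ consists of a finite vertex set $V$ and a set $E$ of subsets of $V$, called edges, with no edge contained in another. It is $r$-uniform if every edge has exactly $r$ elements. A set $S\subseteq V$ is independent if no edge of $\mathcal H$ is contained in $S$. A mapping $f:V\to\mathbb N$ is a proper coloring of $\mathcal H$ if $1<|f(e)|<|e|$ for every $e\in E$, where $f(e)=\{f(v):v\in e\}$. $\mathcal H$ is colorable if it has a proper coloring. $[k]=\{1,\dots,k\}$. *)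

(* Defs.v *)
From mathcomp Require Import all_boot.
Set Implicit Arguments. Unset Strict Implicit. Unset Printing Implicit Defensive.

Definition bihypergraph (V : finType) (E : {set {set V}}) : Prop :=
  forall e1 e2, e1 \in E -> e2 \in E -> e1 \subset e2 -> e1 = e2.

Definition uniform (V : finType) (E : {set {set V}}) (r : nat) : Prop :=
  forall e, e \in E -> #|e| = r.

Definition independent (V : finType) (E : {set {set V}}) (S : {set V}) : Prop :=
  forall e, e \in E -> ~~ (e \subset S).

(* f is a proper coloring: 1 < |f(e)| < |e| for every edge e;
   |f(e)| = number of distinct values of f on e. *)
Definition proper_coloring (V : finType) (E : {set {set V}}) (f : V -> nat) : Prop :=
  forall e, e \in E -> 1 < size (undup [seq f x | x in e]) < #|e|.

Definition colorable (V : finType) (E : {set {set V}}) : Prop :=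
  exists f : V -> nat, proper_coloring E f.

(* Main.v *)
Require Import Defs.
From mathcomp Require Import all_boot.

Theorem mainTheorem7 (r : nat) (V : finType) (E : {set {set V}})
  (P : 'I_r.+1 -> {set V}) (w : V) :
  3 <= r.+1 ->
  bihypergraph E ->
  uniform E r.+1 ->
  (forall v : V, exists! i : 'I_r.+1, v \in P i) ->
  (forall i, independent E (P i)) ->
  P ord_max = [set w] ->
  (forall e, e \in E -> w \in e ->
     exists i : 'I_r.+1, (i < r) /\ [disjoint e & P i]) ->
  colorable E.
Proof.
move=> hr _ hu hP hind hw hdis.
pose blk v : 'I_r.+1 := odflt ord0 [pick i | v \in P i].
have blkP v : v \in P (blk v).
  rewrite /blk; case: pickP => [i //|H].
  by case: (hP v) => i [Hi _]; move: (H i); rewrite Hi.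
have blkU v i : v \in P i -> blk v = i.
  move=> Hi; case: (hP v) => j [_ Hj].
  by rewrite -(Hj _ Hi) -(Hj _ (blkP v)).
exists (fun v => val (blk v)) => e he.
set s := [seq _ | x in e].
have hs : forall y, y \in e -> (val (blk y) \in s) by move=> y hy; apply: map_f; rewrite mem_enum.
have [j Hj] : exists j : 'I_r.+1, forall y, y \in e -> blk y != j.
  case: (boolP (w \in e)) => hwe.
    case: (hdis e he hwe) => j [_ Hd]; exists j => y hy; apply/eqP => E1.
    have := blkP y; rewrite E1 => Hy.
    by rewrite (disjointFr Hd hy) in Hy.
  exists ord_max => y hy; apply/eqP => E1.
  have := blkP y; rewrite E1 hw inE => /eqP Hy; subst y.
  by rewrite hy in hwe.
apply/andP; split.
  have [x hx] : exists x, x \in e.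
    apply/set0Pn; apply/negP => /eqP H0; have := hu e he; rewrite H0 cards0.
    by [].
  rewrite ltnNge; apply/negP => Hle.
  have Hall : e \subset P (blk x).
    apply/subsetP => y hy.
    case: (eqVneq (blk y) (blk x)) => [<-|Hne]; first by apply: blkP.
    exfalso.
    have : size [:: val (blk x); val (blk y)] <= size (undup s).
      apply: uniq_leq_size.
        by rewrite /= inE andbT; apply/negP => /eqP /val_inj Heq; rewrite Heq eqxx in Hne.
      move=> z; rewrite !inE mem_undup => /orP [] /eqP ->; by apply: hs.
    by move=> Hsz; have := leq_trans Hsz Hle.
  by have := hind (blk x) e he => /negP.
rewrite (hu e he).
apply: (@leq_ltn_trans (size [seq val i | i in predC1 j])).
  apply: uniq_leq_size; first exact: undup_uniq.
  move=> z; rewrite mem_undup => /mapP [y]; rewrite mem_enum => hy ->.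
  by apply: map_f; rewrite mem_enum inE; apply: Hj.
by rewrite size_map -cardE cardC1 card_ord.
Qed.
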